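(* Let $\mathbf K\in\mathbb R^{n\times d}$ have rows $\mathbf k_1,\dots,\mathbf k_n$, $\beta>0$, $\mathbf H=(\exp(\beta\langle\mathbf k_i,\mathbf k_l\rangle))_{i,l}$, and for $s\in\{0,1,2,\dots\}$ let $\mathbf T^s$ be the order-$s$ Taylor approximation with entries $\mathbf T^s_{il}=\sum_{|\alpha|\le s}\phi_\alpha(\mathbf k_i)\phi_\alpha(\mathbf k_l)$, where for a multi-index $\alpha\in\mathbb N_0^d$, $\phi_\alpha(\mathbf k)=\sqrt{\frac{1}{|\alpha|!}\binom{|\alpha|}{\alpha}\beta^{|\alpha|}}\,\mathbf k^\alpha$. Then $\mathrm{rank}(\mathbf T^s)\le\binom{s+d}{d}$, $\mathbf T^s\preceq\mathbf H$, and $$\|\mathbf H-\mathbf T^s\|_*\le n\exp(\beta\|\mathbf K\|_{2,\infty}^2)\left(\frac{e\beta\|\mathbf K\|_{2,\infty}^2}{s+1}\right)^{s+1}.$$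
   Context: Multi-index notation: $|\alpha|=\alpha_1+\dots+\alpha_d$, $\binom{s}{\alpha}=\frac{s!}{\alpha_1!\cdots\alpha_d!}$, $\mathbf k^\alpha=\prod_j\mathbf k_j^{\alpha_j}$. Equivalently $\mathbf T^s_{il}=\sum_{p=0}^s\frac1{p!}(\beta\langle\mathbf k_i,\mathbf k_l\rangle)^p$. $\|\mathbf K\|_{2,\infty}$ is the maximal Euclidean row norm, $\|\cdot\|_*$ the nuclear norm, $\preceq$ the Loewner order. *)

(* Defs.v *)
From HB Require Import structures.
From mathcomp Require Import all_boot all_order all_algebra.
From mathcomp Require Import polyrcf.
From mathcomp Require Import reals.
From mathcomp.analysis Require Import sequences exp.
Set Implicit Arguments. Unset Strict Implicit. Unset Printing Implicit Defensive.
Import Order.TTheory GRing.Theory Num.Theory.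
Local Open Scope ring_scope.

Section Defs.
Variable R : realType.

Definition rowdot n d (K : 'M[R]_(n, d)) (i l : 'I_n) : R :=
  \sum_(j < d) K i j * K l j.

Definition expKernel n d (beta : R) (K : 'M[R]_(n, d)) : 'M[R]_n :=
  \matrix_(i, l) expR (beta * rowdot K i l).

Definition mi_abs d s (a : {ffun 'I_d -> 'I_s.+1}) : nat := (\sum_(j < d) a j)%N.

Definition multinom d s (a : {ffun 'I_d -> 'I_s.+1}) : R :=
  (mi_abs a)`!%:R / (\prod_(j < d) (a j)`!)%:R.

Definition phi d s (beta : R) (a : {ffun 'I_d -> 'I_s.+1}) (k : 'rV[R]_d) : R :=
  Num.sqrt ((mi_abs a)`!%:R^-1 * multinom a * beta ^+ mi_abs a)
  * \prod_(j < d) k 0 j ^+ a j.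

(* Multi-indices with |alpha| <= s have all entries <= s, so they are
   enumerated as functions 'I_d -> 'I_(s+1) filtered by |alpha| <= s. *)
Definition taylorMx n d (s : nat) (beta : R) (K : 'M[R]_(n, d)) : 'M[R]_n :=
  \matrix_(i, l) \sum_(a : {ffun 'I_d -> 'I_s.+1} | (mi_abs a <= s)%N)
                   phi beta a (row i K) * phi beta a (row l K).

Definition loewner_le n (A B : 'M[R]_n) : Prop :=
  (B - A)^T = B - A /\ forall x : 'cV[R]_n, 0 <= (x^T *m (B - A) *m x) 0 0.

Definition norm2inf n d (K : 'M[R]_(n, d)) : R :=
  \big[Num.max/0]_(i < n) Num.sqrt (\sum_(j < d) K i j ^+ 2).

(* nuclear norm = sum of singular values (with multiplicity); singular values
   are the square roots of the eigenvalues of A^T A, i.e. of the roots of its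
   characteristic polynomial counted with multiplicity. *)
Definition nuclear_norm m n (A : 'M[R]_(m, n)) : R :=
  let p := char_poly (A^T *m A) in
  \sum_(x <- rootsR p) (mup x p)%:R * Num.sqrt x.

End Defs.

(* Main.v *)
Require Import Defs.
From HB Require Import structures.
From mathcomp Require Import all_boot all_order all_algebra.
From mathcomp Require Import polyrcf.
From mathcomp Require Import reals.
From mathcomp.analysis Require Import sequences exp.
From mathcomp Require all_classical topology normedtype.
From mathcomp Require sesquilinear spectral complex.
From mathcomp Require Import ring lra.
Set Implicit Arguments. Unset Strict Implicit. Unset Printing Implicit Defensive.
Import Order.TTheory GRing.Theory Num.Theory.
Local Open Scope ring_scope.

Module MP1.
Local Open Scope ring_scope.


Lemma fact_neq0 (R : numFieldType) k : (k`!%:R : R) != 0.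
Proof. by rewrite pnatr_eq0 -lt0n fact_gt0. Qed.

Lemma coef_prod_exp (R : numFieldType) d m (g : 'I_d -> R) p : (p < m)%N ->
  (\prod_(j < d) \poly_(k < m) (g j ^+ k / k`!%:R))`_p
    = (\sum_(j < d) g j) ^+ p / p`!%:R.
Proof.
elim: d g p => [|d IH] g p pm.
  rewrite !big_ord0 coef1 expr0n; case: p pm => [|p] _ /=; first by rewrite divr1.
  by rewrite mul0r.
rewrite big_ord_recr /= coefM [in RHS]big_ord_recr /= [X in X ^+ p]addrC exprDn mulr_suml.
apply: eq_bigr => -[j /=]; rewrite ltnS => jp _.
rewrite IH ?(leq_ltn_trans jp) // coef_poly (leq_ltn_trans (leq_subr _ _) pm).
rewrite -(bin_fact jp) natrM natrM -mulr_natr.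
have h1 := fact_neq0 R j; have h2 := fact_neq0 R (p - j).
have h3 : ('C(p, j)%:R : R) != 0 by rewrite pnatr_eq0 -lt0n bin_gt0.
by field; rewrite h1 h2 h3.
Qed.

Lemma prod_poly_ffun (R : comNzRingType) d s (c : 'I_d -> nat -> R) :
  \prod_(j < d) \poly_(k < s.+1) c j k
   = \sum_(a : {ffun 'I_d -> 'I_s.+1}) (\prod_(j < d) c j (a j)) *: 'X^(mi_abs a).
Proof.
under eq_bigr do rewrite poly_def.
rewrite bigA_distr_bigA /=; apply: eq_bigr => a _.
rewrite -mul_polyC rmorph_prod /mi_abs -prodrXr -big_split /=.
by apply: eq_bigr => j _; rewrite mul_polyC.
Qed.

Lemma coef_sum_ffun (R : numFieldType) d s (g : 'I_d -> R) p : (p < s.+1)%N ->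
  \sum_(a : {ffun 'I_d -> 'I_s.+1} | mi_abs a == p)
     \prod_(j < d) (g j ^+ a j / (a j)`!%:R)
  = (\sum_(j < d) g j) ^+ p / p`!%:R.
Proof.
move=> ps; rewrite -(coef_prod_exp g ps) prod_poly_ffun coef_sum big_mkcond /=.
apply: eq_bigr => a _; rewrite coefZ coefXn eq_sym.
by case: eqP => _; rewrite ?mulr1 ?mulr0.
Qed.

Lemma phiM (R : realType) d s (beta : R) (a : {ffun 'I_d -> 'I_s.+1}) (u v : 'rV[R]_d) :
  0 <= beta ->
  phi beta a u * phi beta a v
  = beta ^+ mi_abs a * \prod_(j < d) ((u 0 j * v 0 j) ^+ a j / (a j)`!%:R).
Proof.
move=> hb; rewrite /phi mulrACA -expr2 sqr_sqrtr; last first.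
  rewrite /multinom !mulr_ge0 ?invr_ge0 ?ler0n ?exprn_ge0 //.
rewrite big_split /= -big_split /= prodfV.
under [X in _ = _ * (X * _)]eq_bigr do rewrite exprMn.
rewrite big_split /= /multinom -natr_prod.
have h := fact_neq0 R (mi_abs a).
have h2 : ((\prod_(j < d) (a j)`!)%:R : R) != 0.
  by rewrite pnatr_eq0 -lt0n prodn_gt0 // => j; rewrite fact_gt0.
by field; rewrite h h2.
Qed.

Lemma taylorE (R : realType) n d s (beta : R) (K : 'M[R]_(n, d)) i l :
  0 <= beta ->
  taylorMx s beta K i l = \sum_(p < s.+1) (beta * rowdot K i l) ^+ p / p`!%:R.
Proof.
move=> hb; rewrite mxE.
under eq_bigr do rewrite phiM //.
rewrite (partition_big (fun a : {ffun 'I_d -> 'I_s.+1} => (inord (mi_abs a) : 'I_s.+1)) xpredT) //=.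
apply: eq_bigr => p _.
rewrite exprMn -mulrA -(coef_sum_ffun _ (ltn_ord p)) mulr_sumr.
apply: eq_big => a.
  apply/idP/idP.
    by case/andP => ha /eqP <-; rewrite inordK.
  move/eqP=> hp; rewrite hp -ltnS ltn_ord /=; apply/eqP/val_inj; rewrite /= inordK // hp.
case/andP => ha /eqP <-; rewrite inordK //; congr (_ * _).
by apply: eq_bigr => j _; rewrite !mxE.
Qed.

Lemma rank_sum_le (F : fieldType) m n (I : eqType) (r : seq I) (P : pred I)
   (A : I -> 'M[F]_(m, n)) :
  (\rank (\sum_(a <- r | P a) A a)%R <= \sum_(a <- r | P a) \rank (A a))%N.
Proof.
elim: r => [|x r IH]; first by rewrite !big_nil mxrank0.
rewrite !big_cons; case: (P x) => //.
by rewrite (leq_trans (mxrank_add _ _)) // leq_add2l.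
Qed.

Lemma card_mi_le d s :
  (#|[pred a : {ffun 'I_d -> 'I_s.+1} | (mi_abs a <= s)%N]| <= 'C(s + d, d))%N.
Proof.
rewrite addnC -card_partial_ord_partitions.
pose f (a : {ffun 'I_d -> 'I_s.+1}) : d.-tuple 'I_s.+1 := [tuple a j | j < d].
have finj : injective f.
  move=> a b /(congr1 (fun t => tnth t)) h; apply/ffunP => j.
  by have := congr1 (fun g => g j) h; rewrite /= !tnth_mktuple.
rewrite -(card_imset _ finj); apply: subset_leq_card; apply/subsetP => t.
case/imsetP => a; rewrite ?inE /= => ha ->; rewrite ?inE /f /=.
by rewrite big_map /mi_abs big_enum in ha *.
Qed.

Lemma taylor_rank (R : realType) n d s (beta : R) (K : 'M[R]_(n, d)) :
  (\rank (taylorMx s beta K) <= 'C(s + d, d))%N.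
Proof.
have -> : taylorMx s beta K = \sum_(a : {ffun 'I_d -> 'I_s.+1} | (mi_abs a <= s)%N)
   ((\col_i phi beta a (row i K)) *m (\row_l phi beta a (row l K))).
  apply/matrixP => i l; rewrite !mxE summxE; apply: eq_bigr => a _.
  by rewrite !mxE big_ord1 !mxE.
rewrite (leq_trans (rank_sum_le _ _ _)) // (leq_trans _ (card_mi_le d s)) //.
rewrite -sum1_card leq_sum // => a _.
by rewrite (leq_trans (mxrankM_maxr _ _)) // rank_leq_row.
Qed.

End MP1.
Import MP1.

Module MP2.
Import all_classical topology normedtype.
Import numFieldNormedType.Exports.
Local Open Scope classical_set_scope.
Local Open Scope ring_scope.


Section Exp.
Context {R : realType}.
Implicit Types y : R.

Definition Ex (N : nat) (y : R) := \sum_(0 <= k < N) y ^+ k / k`!%:R.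

Lemma series_expE y N : series (exp_coeff y) N = Ex N y.
Proof. by rewrite /series /Ex /=. Qed.

Lemma expR_cvg y : (fun n => Ex n y) @ \oo --> expR y.
Proof.
have -> : (fun n => Ex n y) = series (exp_coeff y).
  by apply/funext => n; rewrite series_expE.
exact: is_cvg_series_exp_coeff.
Qed.

Lemma Ex_mono y m n : 0 <= y -> (m <= n)%N -> Ex m y <= Ex n y.
Proof.
move=> hy mn; rewrite /Ex (@big_cat_nat _ _ _ m 0 n _ _ (leq0n m) mn) /= lerDl.
by apply: sumr_ge0 => k _; rewrite divr_ge0 ?exprn_ge0 ?ler0n.
Qed.

Lemma Ex_le_expR y m : 0 <= y -> Ex m y <= expR y.
Proof.
move=> hy; apply: (cvgr_to_ge (@expR_cvg y)).
by exists m => // k /= hk; apply: Ex_mono.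
Qed.


Lemma Ex_add y m k : Ex (m + k) y = Ex m y + \sum_(0 <= q < k) y ^+ (m + q) / (m + q)`!%:R.
Proof.
elim: k => [|k IH]; first by rewrite addn0 big_geq // addr0.
by rewrite addnS /Ex big_nat_recr //= -/(Ex _ y) IH big_nat_recr //= addrA.
Qed.

Lemma term_split y m q : 0 <= y ->
  y ^+ (m + q) / (m + q)`!%:R <= (y ^+ m / m`!%:R) * (y ^+ q / q`!%:R).
Proof.
move=> hy.
have hf : (m + q)`! = ('C(m + q, m) * (m`! * q`!))%N.
  by have := bin_fact (leq_addr q m); rewrite addKn => ->.
rewrite hf natrM exprD.
have h1 : (0 : R) < m`!%:R by rewrite ltr0n fact_gt0.
have h2 : (0 : R) < q`!%:R by rewrite ltr0n fact_gt0.
have h3 : (1 : R) <= 'C(m + q, m)%:R by rewrite ler1n bin_gt0 leq_addr.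
have -> : y ^+ m * y ^+ q / ('C(m + q, m)%:R * (m`! * q`!)%:R) =
   ((y ^+ m / m`!%:R) * (y ^+ q / q`!%:R)) / 'C(m + q, m)%:R.
  rewrite natrM; field.
  by rewrite !lt0r_neq0 // (lt_le_trans ltr01).
rewrite ler_pdivrMr ?(lt_le_trans ltr01) // ler_peMr //.
by rewrite mulr_ge0 ?divr_ge0 ?exprn_ge0 ?ler0n.
Qed.

Lemma expR_rem y s : 0 <= y ->
  expR y - Ex s.+1 y <= y ^+ s.+1 / s.+1`!%:R * expR y.
Proof.
move=> hy; rewrite lerBlDl.
apply: (cvgr_to_le (@expR_cvg y)); exists 0%N => // k _ /=.
apply: (le_trans (Ex_mono hy (leq_addl s.+1 k))).
rewrite Ex_add lerD2l.
apply: (@le_trans _ _ (y ^+ s.+1 / s.+1`!%:R * Ex k y)); last first.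
  by rewrite ler_wpM2l ?Ex_le_expR // divr_ge0 ?exprn_ge0 ?ler0n.
rewrite /Ex mulr_sumr; apply: ler_sum => q _; exact: term_split.
Qed.


Lemma cvg_sum_seq (I : Type) (r : seq I) (f : I -> nat -> R) (l : I -> R) :
  (forall i, f i @ \oo --> l i) ->
  (fun k => \sum_(i <- r) f i k) @ \oo --> \sum_(i <- r) l i.
Proof.
move=> h; elim: r => [|x r IH].
  rewrite big_nil; under eq_fun do rewrite big_nil; exact: cvg_cst.
rewrite big_cons; under eq_fun do rewrite big_cons.
exact: (cvgD (h x) IH).
Qed.

End Exp.

End MP2.
Import MP2.

Module MP3.
Import all_classical topology normedtype.
Import numFieldNormedType.Exports.
Local Open Scope classical_set_scope.
Local Open Scope ring_scope.


Section PSD.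
Context {R : realType}.

Lemma quadE n (M : 'M[R]_n) (x : 'cV_n) :
  (x^T *m M *m x) 0 0 = \sum_i \sum_l x i 0 * M i l * x l 0.
Proof.
rewrite mxE exchange_big /=; apply: eq_bigr => l _.
by rewrite mxE mulr_suml; apply: eq_bigr => i _; rewrite mxE.
Qed.

Lemma gram_psd n d (K : 'M[R]_(n, d)) (x : 'cV_n) p :
  0 <= \sum_i \sum_l x i 0 * rowdot K i l ^+ p * x l 0.
Proof.
pose u i (f : {ffun 'I_p -> 'I_d}) := \prod_(t < p) K i (f t).
have E i l : rowdot K i l ^+ p = \sum_(f : {ffun 'I_p -> 'I_d}) u i f * u l f.
  rewrite -[p in LHS]card_ord -prodr_const bigA_distr_bigA /=.
  by apply: eq_bigr => f _; rewrite -big_split.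
have -> : \sum_i \sum_l x i 0 * rowdot K i l ^+ p * x l 0
    = \sum_(f : {ffun 'I_p -> 'I_d}) (\sum_i x i 0 * u i f) ^+ 2.
  under eq_bigr do under eq_bigr do rewrite E mulr_sumr mulr_suml.
  under eq_bigr do rewrite exchange_big /=.
  rewrite exchange_big /=; apply: eq_bigr => f _.
  rewrite expr2 mulr_suml; apply: eq_bigr => i _; rewrite mulr_sumr.
  by apply: eq_bigr => l _; ring.
by apply: sumr_ge0 => f _; rewrite sqr_ge0.
Qed.


Lemma HT_entry n d s (beta : R) (K : 'M[R]_(n, d)) i l : 0 <= beta ->
  (expKernel beta K - taylorMx s beta K) i l
   = expR (beta * rowdot K i l) - Ex s.+1 (beta * rowdot K i l).
Proof.
move=> hb; rewrite /Ex big_mkord -taylorE //.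
by rewrite mxE [X in _ + X]mxE [expKernel _ _ _ _]mxE.
Qed.

Lemma HT_sym n d s (beta : R) (K : 'M[R]_(n, d)) : 0 <= beta ->
  (expKernel beta K - taylorMx s beta K)^T = expKernel beta K - taylorMx s beta K.
Proof.
move=> hb; apply/matrixP => i l; rewrite mxE !HT_entry //.
suff -> : rowdot K l i = rowdot K i l by [].
by apply: eq_bigr => j _; rewrite mulrC.
Qed.

Lemma HT_psd n d s (beta : R) (K : 'M[R]_(n, d)) (x : 'cV_n) : 0 <= beta ->
  0 <= (x^T *m (expKernel beta K - taylorMx s beta K) *m x) 0 0.
Proof.
move=> hb; rewrite quadE.
under eq_bigr do under eq_bigr do rewrite HT_entry //.
set g := rowdot K.
pose f k := \sum_i \sum_l x i 0 * (Ex k (beta * g i l) - Ex s.+1 (beta * g i l)) * x l 0.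
have cf : f @ \oo --> \sum_i \sum_l x i 0 * (expR (beta * g i l) - Ex s.+1 (beta * g i l)) * x l 0.
  apply: cvg_sum_seq => i; apply: cvg_sum_seq => l.
  apply: cvgMl; apply: cvgMr; apply: cvgB; [exact: (@expR_cvg R) | exact: cvg_cst].
apply: (cvgr_to_ge cf); exists s.+1 => // k /= hk.
have -> : f k = \sum_(s.+1 <= p < k) (beta ^+ p / p`!%:R) *
      (\sum_i \sum_l x i 0 * g i l ^+ p * x l 0).
  rewrite /f; apply: esym.
  under eq_bigr do rewrite mulr_sumr.
  rewrite exchange_big /=; apply: eq_bigr => i _.
  under eq_bigr do rewrite mulr_sumr.
  rewrite exchange_big /=; apply: eq_bigr => l _.
  rewrite /Ex (@big_cat_nat _ _ _ s.+1 0 k _ _ (leq0n _) hk) /= addrC addrK.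
  rewrite mulr_sumr mulr_suml; apply: eq_bigr => p _; rewrite exprMn; ring.
apply: sumr_ge0 => p _; apply: mulr_ge0; last exact: gram_psd.
by rewrite divr_ge0 ?exprn_ge0 ?ler0n.
Qed.

End PSD.

End MP3.
Import MP3.

Module MP4.
Import sesquilinear spectral complex.
Local Open Scope ring_scope.


Lemma char_poly_simil (F : fieldType) n (P M : 'M[F]_n) : P \in unitmx ->
  char_poly (invmx P *m M *m P) = char_poly M.
Proof.
move=> uP; rewrite /char_poly /char_poly_mx.
set fP := map_mx polyC P; set fV := map_mx polyC (invmx P).
have hVP : fV *m fP = 1%:M by rewrite -map_mxM mulVmx // map_mx1.
have hX : ('X%:M : 'M[{poly F}]_n) = fV *m 'X%:M *m fP.
  by rewrite -mulmxA -scalar_mxC mulmxA hVP mul1mx.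
rewrite {1}hX !map_mxM -/fP -/fV -mulmxBl -mulmxBr !det_mulmx mulrAC -det_mulmx hVP.
by rewrite det1 mul1r.
Qed.

Section Spec.
Variable R : realType.
Local Notation C := (complex R).
Local Notation fC := (@real_complex_def R (Phant R)).

Lemma spectral_real n (A : 'M[R]_n) : A^T = A ->
  exists2 P : 'M[C]_n, P \in unitmx &
  exists lam : 'I_n -> R,
    map_mx fC A = invmx P *m diag_mx (\row_i (fC (lam i))) *m P.
Proof.
move=> hsym; set AC := map_mx fC A.
have hs : AC \is symmetricmx.
  apply/is_hermitianmxP; rewrite expr0 scale1r.
  apply/matrixP => i j; rewrite !mxE.
  by rewrite -[in LHS]hsym mxE.
have hr : AC \is a realmx.
  by apply/mxOverP => i j; rewrite mxE; apply/complex_realP; eexists.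
have herm := realsym_hermsym hs hr.
have hD := hermitian_spectral_diag_real herm.
have /orthomx_spectralP hA := hermitian_normalmx herm.
exists (spectralmx AC); first exact: spectral_unit.
exists (fun i => complex.Re (spectral_diag AC 0 i)).
rewrite {1}hA; congr (_ *m diag_mx _ *m _); apply/rowP => i; rewrite mxE.
by rewrite RRe_real //; apply: (mxOverP hD).
Qed.


Lemma diag_sq n (lam : 'I_n -> R) :
  diag_mx (\row_i fC (lam i)) *m diag_mx (\row_i fC (lam i)) =
  diag_mx (\row_i fC (lam i ^+ 2)).
Proof.
apply/matrixP => i j; rewrite mul_diag_mx !mxE.
by case: eqP => _; rewrite ?mulr1n ?mulr0n ?mulr0 // rmorphXn expr2.
Qed.

Lemma char_poly_diagC n (lam : 'I_n -> R) :
  char_poly (diag_mx (\row_i fC (lam i))) = map_poly fC (\prod_i ('X - (lam i)%:P)).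
Proof.
rewrite char_poly_trig ?diag_mx_is_trig // rmorph_prod; apply: eq_bigr => i _.
by rewrite !mxE eqxx mulr1n rmorphB /= map_polyX map_polyC.
Qed.

Lemma char_poly_real n (A : 'M[R]_n) : A^T = A -> exists lam : 'I_n -> R,
  [/\ char_poly A = \prod_i ('X - (lam i)%:P),
      char_poly (A^T *m A) = \prod_i ('X - (lam i ^+ 2)%:P) &
      \tr A = \sum_i lam i].
Proof.
move=> hsym; have [P uP [lam hA]] := spectral_real hsym.
exists lam; split.
- apply: (@map_poly_inj _ _ fC).
  by rewrite map_char_poly hA char_poly_simil // char_poly_diagC.
- apply: (@map_poly_inj _ _ fC).
  rewrite map_char_poly hsym map_mxM hA.
  rewrite -!mulmxA (mulmxA P) mulmxV // mul1mx !mulmxA -(mulmxA _ (diag_mx _)).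

  rewrite (mulmxA _ (diag_mx _)) -(mulmxA (invmx P)) diag_sq char_poly_simil //.
  rewrite (char_poly_diagC (fun i => lam i ^+ 2)) //.
- apply: (@complexI R); have -> : fC (\tr A) = \tr (map_mx fC A).
    by rewrite /mxtrace rmorph_sum; apply: eq_bigr => i _; rewrite mxE.
  rewrite hA mxtrace_mulC mulmxA mulmxV // mul1mx mxtrace_diag rmorph_sum.
  by apply: eq_bigr => i _; rewrite mxE.
Qed.


Lemma eig_nonneg n (A : 'M[R]_n) lam :
  (forall x : 'cV_n, 0 <= (x^T *m A *m x) 0 0) -> root (char_poly A) lam -> 0 <= lam.
Proof.
move=> hpsd; rewrite -eigenvalue_root_char => /eigenvalueP [v hv vn0].
have := hpsd v^T; rewrite trmxK hv -scalemxAl mxE.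
have hs : 0 < (v *m v^T) 0 0.
  rewrite mxE lt0r; apply/andP; split; last first.
    by apply: sumr_ge0 => j _; rewrite mxE -expr2 sqr_ge0.
  apply/negP => /eqP h; apply/negP: vn0; rewrite negbK; apply/eqP/rowP => j.
  have hn : forall i : 'I_n, true -> 0 <= v 0 i * v^T i 0.
    by move=> i _; rewrite mxE -expr2 sqr_ge0.
  have := @psumr_eq0P _ _ _ _ hn h j isT; rewrite !mxE => /eqP; rewrite mulf_eq0 orbb.
  by move/eqP ->.
by rewrite (pmulr_lge0 _ hs).
Qed.

Lemma mup_prod x (l : seq R) : mup x (\prod_(y <- l) ('X - y%:P)) = count_mem x l.
Proof.
elim: l => [|y l IH]; first by rewrite big_nil mupNroot // root1.
rewrite big_cons mupM ?polyXsubC_eq0 ?monic_neq0 ?monic_prod_XsubC //.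
by rewrite -[('X - y%:P)]expr1 mup_XsubCX IH /=; case: eqP.
Qed.

Lemma sum_count (l r : seq R) (g : R -> R) : uniq r -> {subset l <= r} ->
  \sum_(x <- r) (count_mem x l)%:R * g x = \sum_(y <- l) g y.
Proof.
move=> ur; elim: l => [|y l IH] sub.
  by rewrite big_nil big1 // => x _; rewrite mul0r.
rewrite big_cons -IH; last by move=> z hz; apply: sub; rewrite inE hz orbT.
have yr : y \in r by apply: sub; rewrite inE eqxx.
under eq_bigr do rewrite /= natrD mulrDl.
rewrite big_split /= (bigD1_seq y yr ur) /= eqxx mul1r big1 ?addr0 //.
by move=> x; rewrite eq_sym => /negPf ->; rewrite mul0r.
Qed.

Lemma sum_rootsR (l : seq R) (g : R -> R) :
  \sum_(x <- rootsR (\prod_(y <- l) ('X - y%:P)))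
     (mup x (\prod_(y <- l) ('X - y%:P)))%:R * g x = \sum_(y <- l) g y.
Proof.
set p := \prod_(y <- l) ('X - y%:P).
have p0 : p != 0 by rewrite monic_neq0 ?monic_prod_XsubC.
under eq_bigr do rewrite mup_prod.
apply: sum_count.
  by apply: lt_sorted_uniq; apply: sorted_roots.
move=> y yl; have := roots_on_rootsR p0 y; rewrite /= root_prod_XsubC yl.
by [].
Qed.

Lemma nuclear_psd n (A : 'M[R]_n) : A^T = A ->
  (forall x : 'cV_n, 0 <= (x^T *m A *m x) 0 0) -> nuclear_norm A = \tr A.
Proof.
move=> hsym hpsd; have [lam [h1 h2 h3]] := char_poly_real hsym.
have hl : forall i, 0 <= lam i.
  move=> i; apply: (eig_nonneg hpsd); rewrite h1.
  have -> : \prod_j ('X - (lam j)%:P) =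
     \prod_(y <- [seq lam j | j <- enum 'I_n]) ('X - y%:P) by rewrite big_map big_enum.
  by rewrite root_prod_XsubC map_f // mem_enum.
rewrite /nuclear_norm h2 h3.
have -> : \prod_i ('X - (lam i ^+ 2)%:P) =
   \prod_(y <- [seq lam i ^+ 2 | i <- enum 'I_n]) ('X - y%:P).
  by rewrite big_map big_enum.
rewrite sum_rootsR big_map big_enum /=; apply: eq_bigr => i _.
by rewrite sqrtr_sqr ger0_norm.
Qed.

End Spec.

End MP4.
Import MP4.

Module MP5.
Local Open Scope ring_scope.


Lemma fact_bound (R : realType) (y : R) s : 0 <= y ->
  y ^+ s.+1 / s.+1`!%:R <= (expR 1 * y / s.+1%:R) ^+ s.+1.
Proof.
move=> hy.
have h := @expR_ge1Dxn R (s.+1)%:R s (ler0n _ _).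
rewrite -[(s.+1)%:R]mulr1 expRM_natl in h.
have h2 : (s.+1%:R : R) ^+ s.+1 / s.+1`!%:R <= expR 1 ^+ s.+1.
  by apply: le_trans h; rewrite mulr1 lerDr.
have hs : (0 : R) < s.+1%:R by rewrite ltr0n.
have -> : y ^+ s.+1 / s.+1`!%:R =
   (y / s.+1%:R) ^+ s.+1 * ((s.+1%:R : R) ^+ s.+1 / s.+1`!%:R).
  rewrite expr_div_n; field; rewrite fact_neq0 /=.
  by rewrite expf_neq0 // lt0r_neq0.
rewrite -(mulrA (expR 1)) [X in _ <= X]exprMn [X in _ <= X]mulrC ler_wpM2l // exprn_ge0 // divr_ge0 // ltW.
Qed.


End MP5.
Import MP5.

Theorem lemmaE2 (R : realType) (n d s : nat) (K : 'M[R]_(n, d)) (beta : R)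
  (hbeta : 0 < beta) :
  [/\ (\rank (taylorMx s beta K) <= 'C(s + d, d))%N,
      loewner_le (taylorMx s beta K) (expKernel beta K) &
      nuclear_norm (expKernel beta K - taylorMx s beta K)
        <= n%:R * expR (beta * norm2inf K ^+ 2)
           * (expR 1 * beta * norm2inf K ^+ 2 / (s.+1)%:R) ^+ s.+1].
Proof.
have hb := ltW hbeta.
have hsym := HT_sym s K hb.
have hpsd : forall x : 'cV_n, 0 <= (x^T *m (expKernel beta K - taylorMx s beta K) *m x) 0 0.
  by move=> x; apply: (HT_psd s K x hb).
split; [exact: taylor_rank | by split |].
rewrite nuclear_psd // /mxtrace.
set M := norm2inf K.
set c := expR (beta * M ^+ 2) * (expR 1 * beta * M ^+ 2 / (s.+1)%:R) ^+ s.+1.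
have hM : 0 <= M.
  rewrite /M /norm2inf; elim/big_ind: _ => [//| x y hx hy | i _]; [by rewrite le_max hx | exact: sqrtr_ge0].
have -> : n%:R * expR (beta * M ^+ 2) * (expR 1 * beta * M ^+ 2 / (s.+1)%:R) ^+ s.+1
   = \sum_(i < n) c by rewrite sumr_const card_ord /c -mulrA mulr_natl.
apply: ler_sum => i _; rewrite HT_entry //.
set y := beta * rowdot K i i.
have hr0 : 0 <= rowdot K i i by apply: sumr_ge0 => j _; rewrite -expr2 sqr_ge0.
have hy : 0 <= y by rewrite mulr_ge0.
have hrM : rowdot K i i <= M ^+ 2.
  have -> : rowdot K i i = Num.sqrt (rowdot K i i) ^+ 2 by rewrite sqr_sqrtr.
  rewrite lerXn2r ?nnegrE ?sqrtr_ge0 //.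
  rewrite /M /norm2inf; apply: le_trans (le_bigmax _ _ i).
  by rewrite /rowdot; under eq_bigr do rewrite -expr2.
have hyM : y <= beta * M ^+ 2 by rewrite ler_wpM2l.
apply: (le_trans (expR_rem s hy)); rewrite /c mulrC.
apply: ler_pM; rewrite ?expR_ge0 ?divr_ge0 ?exprn_ge0 ?ler0n //.
  by rewrite ler_expR.
apply: (@le_trans _ _ ((beta * M ^+ 2) ^+ s.+1 / (s.+1)`!%:R)).
  by rewrite ler_wpM2r ?invr_ge0 ?ler0n // lerXn2r ?nnegrE // (le_trans hy).
by rewrite -(mulrA (expR 1)); apply: fact_bound; rewrite (le_trans hy).
Qed.
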